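(* Let $Y=\{(x,y)\in\mathbb{R}^2:(x/a)^2+y^2=1\}$ with $a>1$. The map $h:Y\to Y$ is bijective if and only if $a\le\sqrt2$.
   Context: $h:Y\to Y$ sends $p\in Y$ to the unique point of the intersection of the normal line to $Y$ at $p$ with $Y\setminus\{p\}$. *)

(* Defs.v *)
From Stdlib Require Import Reals Lra ClassicalEpsilon.
Open Scope R_scope.

Definition on_ellipse (a : R) (p : R * R) : Prop :=
  (fst p / a) ^ 2 + (snd p) ^ 2 = 1.

(* A normal vector to Y at p = (x,y): the gradient of (x/a)^2 + y^2,
   up to the factor 2, i.e. (x / a^2, y). *)
Definition normal_vec (a : R) (p : R * R) : R * R :=
  (fst p / (a ^ 2), snd p).

Definition on_normal_line (a : R) (p q : R * R) : Prop :=
  exists t : R, q = (fst p + t * fst (normal_vec a p),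
                     snd p + t * snd (normal_vec a p)).

Definition normal_meet (a : R) (p q : R * R) : Prop :=
  on_normal_line a p q /\ on_ellipse a q /\ q <> p.

(* h p := the (unique) point of the intersection of the normal line to Y
   at p with Y \ {p} (chosen by Hilbert's epsilon; by the context this
   point exists and is unique for p on Y). *)
Definition h (a : R) (p : R * R) : R * R :=
  epsilon (inhabits (0, 0)) (fun q => normal_meet a p q).

Definition h_bijective_on_Y (a : R) : Prop :=
  (forall p q, on_ellipse a p -> on_ellipse a q -> h a p = h a q -> p = q) /\
  (forall q, on_ellipse a q -> exists p, on_ellipse a p /\ h a p = q).

(* Main.v *)
Require Import Defs.
From Stdlib Require Import Reals Lra Psatz ClassicalEpsilon.
Open Scope R_scope.

Definition Aq a x y := x^2 * (/a^2)^2 + y^2.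
Definition Bq a x y := x^2 * (/a^2)^3 + y^2.
Definition Tq a x y := -2 * Aq a x y / Bq a x y.
Definition hf a (p : R*R) := let (x,y) := p in
  (x + Tq a x y * (x/a^2), y + Tq a x y * y).

Lemma ell_c a x y : 1 < a -> on_ellipse a (x,y) <-> x^2 * (/a^2) + y^2 = 1.
Proof. intros ha; unfold on_ellipse; cbn [fst snd].
  replace ((x/a)^2) with (x^2 * (/a^2)) by (field; lra). reflexivity. Qed.

Lemma c_facts a : 1 < a -> 0 < /a^2 < 1 /\ a^2 * /a^2 = 1.
Proof. intros ha. assert (1 < a^2) by nra. split; [split|].
  - apply Rinv_0_lt_compat; lra.
  - rewrite <- Rinv_1. apply Rinv_lt_contravar; lra.
  - field; lra. Qed.

Lemma B_pos a x y : 1 < a -> on_ellipse a (x,y) -> 0 < Bq a x y.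
Proof. intros ha he. apply ell_c in he; auto. destruct (c_facts a ha) as [[c0 c1] _].
  unfold Bq. set (c := /a^2) in *.
  assert (c^2 * (x^2*c + y^2) <= x^2*c^3 + y^2).
  { assert (0 <= y^2) by nra. assert (c^2 <= 1) by nra. nra. }
  rewrite he in H. assert (0 < c^2) by (apply pow_lt; lra). lra. Qed.

Lemma A_pos a x y : 1 < a -> on_ellipse a (x,y) -> 0 < Aq a x y.
Proof. intros ha he. apply ell_c in he; auto. destruct (c_facts a ha) as [[c0 c1] _].
  unfold Aq. set (c := /a^2) in *.
  assert (c * (x^2*c + y^2) <= x^2*c^2 + y^2).
  { assert (0 <= y^2) by nra. nra. }
  rewrite he in H. lra. Qed.

Lemma key_id a x y t : 1 < a ->
  ((x + t*(x/a^2))/a)^2 + (y+t*y)^2 - ((x/a)^2 + y^2) = t*(2*Aq a x y + t * Bq a x y).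
Proof. intros ha. unfold Aq, Bq. field. lra. Qed.

Lemma meet_uniq a p q : 1 < a -> on_ellipse a p -> normal_meet a p q -> q = hf a p.
Proof. destruct p as [x y]. intros ha he [[t Ht] [hq hne]].
  subst q. unfold on_ellipse in *; unfold normal_vec in *; cbn [fst snd] in *.
  pose proof (key_id a x y t ha). rewrite hq, he in H.
  pose proof (B_pos a x y ha ltac:(exact he)).
  assert (t <> 0). { intro; subst. apply hne. f_equal; ring. }
  assert (t = Tq a x y). { unfold Tq.
    assert (E: 2 * Aq a x y + t * Bq a x y = 0).
    { assert (t * (2 * Aq a x y + t * Bq a x y) = 0) by lra.
      apply Rmult_integral in H2. destruct H2; [contradiction|auto]. }
    replace t with ((t * Bq a x y) / Bq a x y) at 1 by (field; lra).
    replace (t * Bq a x y) with (-2 * Aq a x y) by lra. reflexivity. }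
  subst t. reflexivity. Qed.

Lemma meet_ex a p : 1 < a -> on_ellipse a p -> normal_meet a p (hf a p).
Proof. destruct p as [x y]. intros ha he.
  pose proof (B_pos a x y ha he). pose proof (A_pos a x y ha he).
  split; [|split].
  - exists (Tq a x y). reflexivity.
  - unfold hf, on_ellipse in *; unfold normal_vec in *; cbn [fst snd] in *.
    pose proof (key_id a x y (Tq a x y) ha). rewrite he in H1.
    assert (Tq a x y * (2 * Aq a x y + Tq a x y * Bq a x y) = 0).
    { unfold Tq. field; lra. } lra.
  - unfold hf. intro E. assert (E1 := f_equal fst E). assert (E2 := f_equal snd E).
    cbn [fst snd] in E1, E2. assert (Tq a x y * y = 0) by lra.
    assert (Tq a x y * (x/a^2) = 0) by lra.
    assert (Tq a x y <> 0). { assert (TB: Tq a x y * Bq a x y = -2 * Aq a x y) by (unfold Tq; field; lra).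
      intro Z. rewrite Z in TB. lra. }
    apply ell_c in he; auto. destruct (c_facts a ha) as [[c0 c1] _].
    assert (y = 0) by (apply Rmult_integral in H1; tauto).
    assert (Hx: x/a^2 = 0) by (apply Rmult_integral in H2; tauto).
    assert (x = 0). { unfold Rdiv in Hx. apply Rmult_integral in Hx. destruct Hx; auto.
      assert (0 < / a^2) by lra. lra. }
    subst. lra.
Qed.

Lemma h_eq a p : 1 < a -> on_ellipse a p -> h a p = hf a p.
Proof. intros ha he. apply meet_uniq; auto. unfold h. apply epsilon_spec.
  exists (hf a p). apply meet_ex; auto. Qed.

Definition Nn c x := (2*c-1) + x^2*c*(1-c)^2.
Definition Dd c x := 1 - x^2*c*(1-c^2).

Lemma hf_fst a x y : 1 < a -> on_ellipse a (x,y) ->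
  fst (hf a (x,y)) * Dd (/a^2) x = - x * Nn (/a^2) x /\
  snd (hf a (x,y)) * Bq a x y = y * (Bq a x y - 2 * Aq a x y) /\
  Bq a x y = Dd (/a^2) x.
Proof. intros ha he. pose proof (B_pos a x y ha he).
  apply ell_c in he; auto. destruct (c_facts a ha) as [[c0 c1] ac].
  assert (HB: Bq a x y = Dd (/a^2) x).
  { unfold Bq, Dd. replace (y^2) with (1 - x^2 * /a^2) by lra. ring. }
  unfold hf; cbn [fst snd]. split; [|split; auto].
  - rewrite <- HB. unfold Tq.
    replace ((x + -2 * Aq a x y / Bq a x y * (x / a ^ 2)) * Bq a x y)
      with (x * (Bq a x y - 2 * (/a^2) * Aq a x y)) by (field; lra).
    unfold Nn, Bq, Aq. replace (y^2) with (1 - x^2 * /a^2) by lra. ring.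
  - unfold Tq. field. lra.
Qed.

Lemma mono_id c x1 x2 :
  x1 * Nn c x1 * Dd c x2 - x2 * Nn c x2 * Dd c x1 =
  (x1 - x2) * ((2*c-1) + (1-c)^2*c*(x1^2+x1*x2+x2^2) + (2*c-1)*(1-c^2)*c*x1*x2
               - (1-c)^2*(1-c^2)*c^2*x1^2*x2^2).
Proof. unfold Nn, Dd. ring. Qed.

Lemma br_pos c x1 x2 : 1/2 <= c < 1 -> x1^2*c <= 1 -> x2^2*c <= 1 -> x1 <> x2 ->
  0 < (2*c-1) + (1-c)^2*c*(x1^2+x1*x2+x2^2) + (2*c-1)*(1-c^2)*c*x1*x2
               - (1-c)^2*(1-c^2)*c^2*x1^2*x2^2.
Proof. intros [c0 c1] h1 h2 hne.
  set (f := 1 - c^2). set (e := (1-c)^2).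
  assert (0 < f < 1) by (unfold f; nra).
  assert (0 < e) by (unfold e; nra).
  assert (0 < x1^2 + x2^2).
  { destruct (Req_dec x1 0); [subst; assert (x2 <> 0) by auto; nra | nra]. }
  assert (hp: (c*x1*x2)^2 <= 1).
  { replace ((c*x1*x2)^2) with ((x1^2*c)*(x2^2*c)) by ring.
    assert (0 <= x1^2*c) by nra. assert (0 <= x2^2*c) by nra. nra. }
  assert (t1: 0 <= (2*c-1) * (1 + f*(c*x1*x2))).
  { apply Rmult_le_pos; [lra|]. assert (-1 <= c*x1*x2 <= 1) by nra. nra. }
  assert (q1: c*x1^2*x2^2 <= x2^2) by (assert (0<=x2^2) by nra; nra).
  assert (q2: c*x1^2*x2^2 <= x1^2) by (assert (0<=x1^2) by nra; nra).
  assert (t2: 0 < e*c*((x1^2+x1*x2+x2^2) - f*c*x1^2*x2^2)).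
  { apply Rmult_lt_0_compat; [nra|].
    assert (x1^2+x1*x2+x2^2 >= (x1^2+x2^2)/2) by (assert (0 <= (x1+x2)^2) by (apply pow2_ge_0); nra).
    assert (c*x1^2*x2^2 <= (x1^2+x2^2)/2) by lra.
    assert (f*(c*x1^2*x2^2) <= f*((x1^2+x2^2)/2)) by (apply Rmult_le_compat_l; lra).
    replace (f*c*x1^2*x2^2) with (f*(c*x1^2*x2^2)) by ring. nra. }
  unfold f, e in *. nra.
Qed.

Lemma ell_le a x y : 1 < a -> on_ellipse a (x,y) -> x^2 * /a^2 <= 1.
Proof. intros ha he. apply ell_c in he; auto. assert (0 <= y^2) by (apply pow2_ge_0). lra. Qed.

Lemma inj_part a : 1 < a -> a^2 <= 2 ->
  forall p q, on_ellipse a p -> on_ellipse a q -> h a p = h a q -> p = q.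
Proof. intros ha ha2 [x1 y1] [x2 y2] h1 h2 E.
  rewrite (h_eq a _ ha h1), (h_eq a _ ha h2) in E.
  destruct (c_facts a ha) as [[c0 c1] ac].
  assert (chalf: 1/2 <= /a^2).
  { replace (/a^2) with (1 / a^2) by (field; lra). apply Rmult_le_reg_r with (a^2). nra.
    field_simplify; lra. }
  destruct (hf_fst a x1 y1 ha h1) as [F1 [S1 B1]].
  destruct (hf_fst a x2 y2 ha h2) as [F2 [S2 B2]].
  pose proof (B_pos a x1 y1 ha h1). pose proof (B_pos a x2 y2 ha h2).
  pose proof (A_pos a x1 y1 ha h1). pose proof (A_pos a x2 y2 ha h2).
  pose proof (ell_le a x1 y1 ha h1). pose proof (ell_le a x2 y2 ha h2).
  set (c := /a^2) in *.
  assert (ex: x1 = x2).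
  { destruct (Req_dec x1 x2) as [|hne]; auto. exfalso.
    pose proof (br_pos c x1 x2 (conj chalf c1) H3 H4 hne).
    pose proof (mono_id c x1 x2).
    set (X := fst (hf a (x1,y1))) in *.
    assert (fst (hf a (x2,y2)) = X) by (unfold X; rewrite E; auto).
    rewrite H7 in F2.
    assert (x1 * Nn c x1 * Dd c x2 - x2 * Nn c x2 * Dd c x1 = 0).
    { replace (x1 * Nn c x1) with (- (X * Dd c x1)) by lra.
      replace (x2 * Nn c x2) with (- (X * Dd c x2)) by lra. ring. }
    rewrite H8 in H6. assert (x1 - x2 <> 0) by lra.
    assert (0 = (x1-x2) * ((2*c-1) + (1-c)^2*c*(x1^2+x1*x2+x2^2) + (2*c-1)*(1-c^2)*c*x1*x2
               - (1-c)^2*(1-c^2)*c^2*x1^2*x2^2)) by lra.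
    symmetry in H10. apply Rmult_integral in H10. lra. }
  subst x2.
  apply ell_c in h1; auto. apply ell_c in h2; auto. fold c in h1, h2.
  assert (yy: y1^2 = y2^2) by lra.
  assert (TA: Aq a x1 y1 = Aq a x1 y2) by (unfold Aq; rewrite yy; auto).
  assert (TB: Bq a x1 y1 = Bq a x1 y2) by (unfold Bq; rewrite yy; auto).
  assert (TT: Tq a x1 y1 = Tq a x1 y2) by (unfold Tq; rewrite TA, TB; auto).
  assert (E2 := f_equal snd E). unfold hf in E2; cbn [snd] in E2.
  rewrite TT in E2. set (T := Tq a x1 y2) in *.
  assert (AB: Bq a x1 y2 - 2 * Aq a x1 y2 < 0).
  { assert (Aq a x1 y2 - Bq a x1 y2 >= 0).
    { unfold Aq, Bq. fold c. replace (c^3) with (c^2*c) by ring.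
      assert (0 <= x1^2 * c^2) by (apply Rmult_le_pos; apply pow2_ge_0).
      replace (x1 ^ 2 * c ^ 2 + y2 ^ 2 - (x1 ^ 2 * (c ^ 2 * c) + y2 ^ 2)) with
        (x1^2*c^2 * (1 - c)) by ring. apply Rle_ge, Rmult_le_pos; lra. }
    lra. }
  assert (T1: (1 + T) * Bq a x1 y2 = Bq a x1 y2 - 2 * Aq a x1 y2) by (unfold T, Tq; field; lra).
  assert (1 + T <> 0). { intro Z. rewrite Z in T1. lra. }
  assert ((y1 - y2) * (1 + T) = 0) by lra.
  apply Rmult_integral in H6. destruct H6 as [H6|H6]; [|contradiction].
  f_equal; lra.
Qed.

Lemma hf_neg a x y : hf a (x, -y) = (fst (hf a (x,y)), - snd (hf a (x,y))).
Proof. unfold hf, Tq, Aq, Bq. cbn [fst snd]. replace ((-y)^2) with (y^2) by ring. f_equal; ring. Qed.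

Lemma surj_part a : 1 < a ->
  forall q, on_ellipse a q -> exists p, on_ellipse a p /\ h a p = q.
Proof. intros ha [X Y] hq.
  destruct (c_facts a ha) as [[c0 c1] ac].
  pose proof (ell_le a X Y ha hq).
  set (c := /a^2) in *.
  set (g := fun x => x * Nn c x + X * Dd c x).
  assert (cg: continuity g) by (unfold g, Nn, Dd; reg).
  assert (XX: X^2 <= a^2). { assert (X^2 * c * a^2 <= 1 * a^2) by (apply Rmult_le_compat_r; nra).
    replace (X^2*c*a^2) with (X^2 * (a^2 * c)) in H0 by ring. rewrite ac in H0. lra. }
  assert (Na: forall z, z^2 = a^2 -> Nn c z = c^2 /\ Dd c z = c^2).
  { intros z hz. unfold Nn, Dd. rewrite hz. replace (a^2*c) with 1 by (rewrite <- ac; ring).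
    split; [replace (a ^ 2 * c * (1 - c) ^ 2) with (a^2*c*(1-c)^2) by ring | ];
    rewrite ?Rmult_assoc, ?(Rmult_comm (a^2)); try nra.
    all: replace (a^2 * c) with 1 in * by (rewrite <- ac; ring); ring_simplify; try lra.
    all: replace (a ^ 2 * c) with 1 by (rewrite <- ac; ring); ring. }
  destruct (Na a ltac:(ring)) as [N1 D1].
  destruct (Na (-a) ltac:(ring)) as [N2 D2].
  assert (ga: g (-a) * g a <= 0).
  { unfold g. rewrite N1, D1, N2, D2.
    replace ((- a * c ^ 2 + X * c ^ 2) * (a * c ^ 2 + X * c ^ 2)) with
      (c^4 * (X^2 - a^2)) by ring.
    assert (0 <= c^4) by (apply pow_le; lra). nra. }
  destruct (IVT_cor g (-a) a cg ltac:(lra) ga) as [x [[hx1 hx2] gx]].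
  assert (x2: x^2 * c <= 1).
  { assert (x^2 <= a^2) by nra.
    assert (x^2 * c <= a^2 * c) by (apply Rmult_le_compat_r; lra). lra. }
  set (y := sqrt (1 - x^2*c)).
  assert (hy: y^2 = 1 - x^2*c) by (unfold y; rewrite <- Rsqr_pow2; apply Rsqr_sqrt; lra).
  assert (he1: on_ellipse a (x,y)) by (apply ell_c; auto; fold c; lra).
  destruct (hf_fst a x y ha he1) as [F1 _].
  fold c in F1.
  assert (Dp: 0 < Dd c x).
  { unfold Dd. assert (x^2*c*(1-c^2) <= 1*(1-c^2)) by (apply Rmult_le_compat_r; nra). nra. }
  assert (fx: fst (hf a (x,y)) = X).
  { unfold g in gx. apply (Rmult_eq_reg_r (Dd c x)); lra. }
  destruct (meet_ex a (x,y) ha he1) as [_ [eh _]].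
  destruct (hf a (x,y)) as [X' Y'] eqn:EH. cbn [fst] in fx. subst X'.
  apply ell_c in eh; auto. apply ell_c in hq; auto. fold c in eh, hq.
  assert (YY: Y'^2 = Y^2) by lra.
  assert (HY: Y' = Y \/ Y' = -Y).
  { assert (P: (Y' - Y) * (Y' + Y) = 0) by nra. apply Rmult_integral in P. lra. }
  destruct HY as [HY|HY].
  - exists (x,y). split; auto. rewrite h_eq; auto. rewrite EH. subst; auto.
  - exists (x,-y). split.
    + apply ell_c; auto. fold c. replace ((-y)^2) with (y^2) by ring. lra.
    + rewrite h_eq; auto. rewrite hf_neg, EH. cbn. f_equal. lra.
      apply ell_c; auto. fold c. replace ((-y)^2) with (y^2) by ring. lra.
Qed.

Lemma noninj a : 2 < a^2 -> 1 < a ->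
  ~ (forall p q, on_ellipse a p -> on_ellipse a q -> h a p = h a q -> p = q).
Proof. intros ha2 ha I.
  set (s := sqrt (a^2 - 2)).
  assert (hs: s^2 = a^2 - 2) by (unfold s; rewrite <- Rsqr_pow2; apply Rsqr_sqrt; lra).
  assert (sp: 0 < s) by (unfold s; apply sqrt_lt_R0; lra).
  set (x0 := a^2 * s / (a^2 - 1)). set (y0 := 1 / (a^2-1)).
  assert (e0: on_ellipse a (x0,y0)).
  { unfold on_ellipse, x0, y0; cbn [fst snd].
    replace ((a ^ 2 * s / (a ^ 2 - 1) / a) ^ 2 + (1 / (a ^ 2 - 1)) ^ 2)
      with ((a^2 * s^2 + 1) / (a^2-1)^2) by (field; lra). rewrite hs. field. lra. }
  assert (e1: on_ellipse a (0,1)) by (unfold on_ellipse; cbn [fst snd]; field; lra).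
  assert (m0: normal_meet a (x0,y0) (0,-1)).
  { split; [|split].
    - exists (-a^2). unfold normal_vec; cbn [fst snd]. unfold x0, y0. f_equal; field; lra.
    - unfold on_ellipse; cbn [fst snd]. field. lra.
    - intro E. assert (E2 := f_equal snd E). cbn in E2. unfold y0 in E2.
      assert (0 < 1/(a^2-1)) by (apply Rdiv_lt_0_compat; lra). lra. }
  assert (m1: normal_meet a (0,1) (0,-1)).
  { split; [|split].
    - exists (-2). unfold normal_vec; cbn [fst snd]. f_equal; field; lra.
    - unfold on_ellipse; cbn [fst snd]. field. lra.
    - intro E. assert (E2 := f_equal snd E). cbn in E2. lra. }
  assert (h a (x0,y0) = h a (0,1)).
  { rewrite (h_eq a _ ha e0), (h_eq a _ ha e1).
    rewrite <- (meet_uniq a _ _ ha e0 m0). rewrite <- (meet_uniq a _ _ ha e1 m1). auto. }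
  specialize (I _ _ e0 e1 H). assert (E1 := f_equal fst I). cbn in E1. unfold x0 in E1.
  assert (0 < a^2 * s / (a^2-1)) by (apply Rdiv_lt_0_compat; nra). lra.
Qed.

Theorem mainTheorem14 (a : R) (ha : 1 < a) :
  h_bijective_on_Y a <-> a <= sqrt 2.
Proof.
  pose proof (sqrt_sqrt 2 ltac:(lra)). pose proof (sqrt_pos 2).
  split.
  - intros [I S]. destruct (Rle_dec a (sqrt 2)) as [|n]; auto. exfalso.
    apply (noninj a); auto. nra.
  - intros hle. split.
    + apply inj_part; auto. nra.
    + apply surj_part; auto.
Qed.
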